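(* Let $G$ be a group with generating set $Y$. Let $S=\{x_0,\dots,x_m\}$ and $T=\{y_0,\dots,y_n\}$ be subsets of $Y$ with $x_0=y_0$. Assume (i) $[x_i,y_j]=1$ for $1\le i\le m$ and $1\le j\le n$, and (ii) $\langle y_0,y_1,\dots,y_n\rangle=\langle y_0y_1\cdots y_n\rangle\times\langle y_1,\dots,y_n\rangle$ (internal direct product). Then $[x_i,\langle y_0,\dots,y_n\rangle^2]=1$ for $1\le i\le m$, and $[y_j,\langle x_0,\dots,x_m\rangle^2]=1$ for $1\le j\le n$.
   Context: Conventions: $[x,y]=x^{-1}y^{-1}xy$; for a subgroup $H$, $H^2=[H,H]$ is its commutator subgroup; $[a,H]=1$ means $a$ commutes with every element of $H$. *)

(* Defs.v *)
From Stdlib Require Import Arith Lia.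

Record group := Group {
  carrier :> Type;
  gmul : carrier -> carrier -> carrier;
  ginv : carrier -> carrier;
  gone : carrier;
  gmulA : forall a b c, gmul a (gmul b c) = gmul (gmul a b) c;
  gmul1 : forall a, gmul gone a = a;
  gmulV : forall a, gmul (ginv a) a = gone
}.

Arguments gmul {g}.
Arguments ginv {g}.
Arguments gone {g}.

Section Defs.
Variable G : group.

Definition comm (x y : G) : G := gmul (gmul (ginv x) (ginv y)) (gmul x y).

Definition is_subgroup (H : G -> Prop) : Prop :=
  H gone /\ (forall a b, H a -> H b -> H (gmul a b)) /\ (forall a, H a -> H (ginv a)).

Definition gen (A : G -> Prop) : G -> Prop :=
  fun g => forall H, is_subgroup H -> (forall a, A a -> H a) -> H g.

(* H^2 = [H,H], the commutator subgroup *)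
Definition derived (H : G -> Prop) : G -> Prop :=
  gen (fun g => exists a b, H a /\ H b /\ g = comm a b).

Definition centralizes (a : G) (H : G -> Prop) : Prop :=
  forall h, H h -> comm a h = gone.

Definition normal_in (B A : G -> Prop) : Prop :=
  forall a b, A a -> B b -> B (gmul (ginv a) (gmul b a)).

Definition inner_direct (A B C : G -> Prop) : Prop :=
  is_subgroup A /\ is_subgroup B /\ is_subgroup C /\
  (forall b, B b -> A b) /\ (forall c, C c -> A c) /\
  normal_in B A /\ normal_in C A /\
  (forall g, B g -> C g -> g = gone) /\
  (forall a, A a -> exists b c, B b /\ C c /\ a = gmul b c).

Fixpoint prod_upto (y : nat -> G) (n : nat) : G :=
  match n with
  | 0 => y 0
  | S k => gmul (prod_upto y k) (y (S k))
  end.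

End Defs.

Arguments comm {G}.
Arguments is_subgroup {G}.
Arguments gen {G}.
Arguments derived {G}.
Arguments centralizes {G}.
Arguments inner_direct {G}.
Arguments prod_upto {G}.

(* Main.v *)
Require Import Defs.
From Stdlib Require Import Arith Lia.

Local Notation "a ** b" := (gmul a b) (at level 40, left associativity).

Lemma mulgV {G : group} (a : G) : a ** ginv a = gone.
Proof.
  rewrite <- (gmul1 G (a ** ginv a)).
  rewrite <- (gmulV G (a ** ginv a)) at 1.
  rewrite <- !gmulA. rewrite (gmulA G (ginv a) a), gmulV, gmul1. apply gmulV.
Qed.

Lemma mulg1 {G : group} (a : G) : a ** gone = a.
Proof. rewrite <- (gmulV G a), gmulA, mulgV. apply gmul1. Qed.

Lemma invg_uniq {G : group} (a b : G) : a ** b = gone -> b = ginv a.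
Proof.
  intro H. rewrite <- (gmul1 G b), <- (gmulV G a), <- gmulA, H. apply mulg1.
Qed.

Lemma invgK {G : group} (a : G) : ginv (ginv a) = a.
Proof. symmetry. apply invg_uniq. apply gmulV. Qed.

Lemma invgM {G : group} (a b : G) : ginv (a ** b) = ginv b ** ginv a.
Proof.
  symmetry. apply invg_uniq.
  rewrite !gmulA. rewrite <- (gmulA G a b), mulgV, mulg1. apply mulgV.
Qed.

Lemma inv1 {G : group} : ginv (@gone G) = gone.
Proof. symmetry. apply invg_uniq. apply gmul1. Qed.

Definition commute {G : group} (a b : G) := a ** b = b ** a.

Lemma commute_comm {G : group} (a b : G) : comm a b = gone <-> commute a b.
Proof.
  unfold comm, commute. split; intro H.
  - apply invg_uniq in H. rewrite H, invgM, !invgK. reflexivity.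
  - rewrite H. rewrite !gmulA. rewrite <- (gmulA G (ginv a) (ginv b) b), gmulV, mulg1.
    apply gmulV.
Qed.

Lemma com_sym {G : group} (a b : G) : commute a b -> commute b a.
Proof. unfold commute; auto. Qed.

Lemma com1 {G : group} (a : G) : commute a gone.
Proof. unfold commute. rewrite mulg1, gmul1. reflexivity. Qed.

Lemma comM {G : group} (a b c : G) : commute a b -> commute a c -> commute a (b ** c).
Proof.
  unfold commute; intros H1 H2. rewrite gmulA, H1, <- gmulA, H2, gmulA. reflexivity.
Qed.

Lemma comV {G : group} (a b : G) : commute a b -> commute a (ginv b).
Proof.
  unfold commute; intro H.
  rewrite <- (mulg1 (ginv b ** a)), <- (mulgV b).
  rewrite !gmulA. rewrite <- (gmulA G (ginv b) a b), H, gmulA, gmulV, gmul1. reflexivity.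
Qed.

Lemma cent_sub {G : group} (a : G) : is_subgroup (commute a).
Proof.
  split; [apply com1|split]; intros; [apply comM|apply comV]; auto.
Qed.

Lemma gen_sub {G : group} (A : G -> Prop) : is_subgroup (gen A).
Proof.
  split; [|split].
  - intros H [h1 _] _; exact h1.
  - intros a b Ha Hb H sH HA. pose proof sH as [_ [hm _]]. apply hm; [apply Ha|apply Hb]; auto.
  - intros a Ha H sH HA. pose proof sH as [h1 [hm hi]]. apply hi. apply Ha; auto.
Qed.

Lemma gen_in {G : group} (A : G -> Prop) a : A a -> gen A a.
Proof. intros Ha H _ HA. auto. Qed.

Lemma gen_single_comm {G : group} (s a b : G) :
  gen (fun g => g = s) a -> gen (fun g => g = s) b -> commute a b.
Proof.
  intros Ha Hb.
  assert (Hs : forall c, gen (fun g => g = s) c -> commute s c).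
  { intros c Hc. apply Hc. apply cent_sub. intros a0 ->. reflexivity. }
  apply Hb. apply cent_sub. intros a0 ->. apply com_sym. apply Hs; auto.
Qed.

Lemma commP {G : group} (z1 z2 w1 w2 : G) :
  commute w1 z1 -> commute w1 z2 -> commute w2 z1 -> commute w2 z2 -> commute w1 w2 ->
  comm (z1 ** w1) (z2 ** w2) = comm z1 z2.
Proof.
  intros c11 c12 c21 c22 cw.
  assert (E : comm (z1 ** w1) (z2 ** w2) = ginv ((z2 ** w2) ** (z1 ** w1)) ** ((z1 ** w1) ** (z2 ** w2))).
  { unfold comm. rewrite (invgM (z2 ** w2) (z1 ** w1)). reflexivity. }
  assert (E1 : (z1 ** w1) ** (z2 ** w2) = (z1 ** z2) ** (w1 ** w2)).
  { rewrite !gmulA. rewrite <- (gmulA G z1 w1 z2), c12, gmulA. reflexivity. }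
  assert (E2 : (z2 ** w2) ** (z1 ** w1) = (z2 ** z1) ** (w1 ** w2)).
  { rewrite !gmulA. rewrite <- (gmulA G z2 w2 z1), c21, gmulA.
    rewrite <- (gmulA G (z2 ** z1) w2 w1), <- cw, gmulA. reflexivity. }
  rewrite E, E1, E2, (invgM (z2 ** z1) (w1 ** w2)), (invgM z2 z1).
  assert (C : commute (w1 ** w2) (comm z1 z2)).
  { unfold comm.
    assert (H : forall z, commute w1 z -> commute w2 z -> commute (w1 ** w2) z).
    { intros z h1 h2. apply com_sym. apply comM; apply com_sym; auto. }
    apply comM; apply comM; try apply H; try apply comV; auto. }
  assert (R : ginv (w1 ** w2) ** (ginv z1 ** ginv z2) ** ((z1 ** z2) ** (w1 ** w2))
            = ginv (w1 ** w2) ** (comm z1 z2 ** (w1 ** w2))).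
  { unfold comm. rewrite !gmulA. reflexivity. }
  rewrite R. rewrite <- C, gmulA, gmulV, gmul1. reflexivity.
Qed.

Lemma derived_sub {G : group} (A Z W : G -> Prop) :
  is_subgroup Z ->
  (forall a, A a -> exists z w, Z z /\ W w /\ a = z ** w) ->
  (forall z w, Z z -> W w -> commute w z) ->
  (forall w w', W w -> W w' -> commute w w') ->
  forall g, derived A g -> Z g.
Proof.
  intros sZ dec cZW cW g Hg. apply Hg; auto.
  intros c [a [b [Ha [Hb ->]]]].
  destruct (dec a Ha) as [z1 [w1 [Hz1 [Hw1 ->]]]].
  destruct (dec b Hb) as [z2 [w2 [Hz2 [Hw2 ->]]]].
  rewrite commP; auto.
  destruct sZ as [s1 [sm si]]. unfold comm. apply sm; apply sm; auto.
Qed.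

Fixpoint qprod {G : group} (y : nat -> G) (n : nat) : G :=
  match n with 0 => gone | S k => qprod y k ** y (S k) end.

Lemma prod_q {G : group} (y : nat -> G) n : prod_upto y n = y 0 ** qprod y n.
Proof.
  induction n; simpl. - symmetry; apply mulg1.
  - rewrite IHn, gmulA. reflexivity.
Qed.

Theorem mainTheorem10 (G : group) (Y : G -> Prop) (m n : nat)
  (x y : nat -> G)
  (hY : forall g : G, gen Y g)
  (hxY : forall i, i <= m -> Y (x i))
  (hyY : forall j, j <= n -> Y (y j))
  (h0 : x 0 = y 0)
  (hcomm : forall i j, 1 <= i <= m -> 1 <= j <= n -> comm (x i) (y j) = gone)
  (hdir : inner_direct
            (gen (fun g => exists j, j <= n /\ g = y j))
            (gen (fun g => g = prod_upto y n))
            (gen (fun g => exists j, 1 <= j <= n /\ g = y j))) :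
  (forall i, 1 <= i <= m ->
     centralizes (x i) (derived (gen (fun g => exists j, j <= n /\ g = y j)))) /\
  (forall j, 1 <= j <= n ->
     centralizes (y j) (derived (gen (fun g => exists i, i <= m /\ g = x i)))).
Proof.
  set (Ks := gen (fun g => exists j, 1 <= j <= n /\ g = y j)) in *.
  set (Bs := gen (fun g => g = prod_upto y n)) in *.
  destruct hdir as [sH [sB [sK [BH [KH [nB [nK [triv dec]]]]]]]].
  assert (BK : forall b c, Bs b -> Ks c -> commute b c).
  { intros b c Hb Hc. apply commute_comm. apply triv.
    - replace (comm b c) with (ginv b ** (ginv c ** (b ** c)))
        by (unfold comm; rewrite !gmulA; reflexivity).
      destruct sB as [_ [bm bi]]. apply bm; auto; try (apply nB; auto).
    - replace (comm b c) with ((ginv b ** (ginv c ** b)) ** c)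
        by (unfold comm; rewrite !gmulA; reflexivity).
      destruct sK as [_ [km ki]]. apply km; auto; apply km; auto; try (apply nK; auto). }
  assert (KX : forall i, 1 <= i <= m -> forall k, Ks k -> commute (x i) k).
  { intros i Hi k Hk. apply Hk. apply cent_sub.
    intros a [j [Hj ->]]. apply commute_comm. apply hcomm; auto. }
  split.
  - intros i Hi h Hh. apply commute_comm. apply (KX i Hi).
    revert h Hh. apply (derived_sub _ Ks Bs); auto.
    + intros a Ha. destruct (dec a Ha) as [b [c [Hb [Hc ->]]]].
      exists c, b. repeat split; auto. apply BK; auto.
    + intros w w' Hw Hw'. apply (gen_single_comm _ _ _ Hw Hw').
  - intros j Hj h Hh.
    set (Zc := fun g => forall k, Ks k -> commute g k).
    set (q := qprod y n).
    set (W := gen (fun g => g = q)).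
    assert (qK : forall k, k <= n -> Ks (qprod y k)).
    { induction k; intro Hk; simpl.
      - apply sK.
      - destruct sK as [_ [km _]]. apply km. apply IHk; lia.
        apply gen_in. exists (S k). split; [lia|reflexivity]. }
    assert (WK : forall w, W w -> Ks w).
    { intros w Hw. apply Hw; auto. intros a ->. apply qK; lia. }
    assert (sZ : is_subgroup Zc).
    { split; [|split]; unfold Zc.
      - intros k _. apply com_sym, com1.
      - intros a b Ha Hb k Hk. apply com_sym, comM; apply com_sym; auto.
      - intros a Ha k Hk. apply com_sym, comV, com_sym; auto. }
    assert (cZW : forall z w, Zc z -> W w -> commute w z).
    { intros z w Hz Hw. apply com_sym. apply Hz. auto. }
    assert (Hd : Zc h).
    { revert h Hh. apply (derived_sub _ Zc W); auto.
      2: { intros w w' Hw Hw'. apply (gen_single_comm _ _ _ Hw Hw'). }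
      set (D := fun a : G => exists z w, Zc z /\ W w /\ a = z ** w).
      assert (sD : is_subgroup D).
      { destruct sZ as [z1 [zm zi]]. destruct (gen_sub (fun g => g = q)) as [w1 [wm wi]].
        split; [|split].
        - exists gone, gone. repeat split; auto. rewrite mulg1; reflexivity.
        - intros a b [z [w [Hz [Hw ->]]]] [z' [w' [Hz' [Hw' ->]]]].
          exists (z ** z'), (w ** w'). repeat split; auto; [apply wm; auto|].
          rewrite !gmulA. rewrite <- (gmulA G z w z'), (cZW z' w Hz' Hw), gmulA. reflexivity.
        - intros a [z [w [Hz [Hw ->]]]]. exists (ginv z), (ginv w). repeat split; auto; [apply wi; auto|].
          rewrite invgM. symmetry. apply comV, com_sym, comV, cZW; auto. }
      intros a Ha. apply Ha; auto.
      intros b [i [Hi ->]]. destruct i as [|i].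
      - exists (prod_upto y n), (ginv q). repeat split.
        + intros k Hk. apply BK; auto. apply gen_in. reflexivity.
        + apply (gen_sub _). apply gen_in. reflexivity.
        + rewrite h0, prod_q. fold q. rewrite <- gmulA, mulgV, mulg1. reflexivity.
      - exists (x (S i)), gone. repeat split.
        + intros k Hk. apply KX; auto; lia.
        + apply (gen_sub _).
        + rewrite mulg1; reflexivity. }
    apply commute_comm. apply com_sym. apply Hd. apply gen_in. exists j; auto.
Qed.
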